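(* Let $k$ be an odd integer with $k\ge 5$, let $D$ be a strong $k$-quasi-transitive digraph with $\mathrm{diam}(D)\ge k+2$, let $u,v\in V(D)$ with $d(u,v)=k+2$, and let $P$ be a shortest $(u,v)$-path. If $D[V(P)]$ is a semicomplete digraph, then $D[V(D)\setminus V(P)]$ is a semicomplete digraph.
   Context: All digraphs are finite, without loops or multiple arcs (opposite arcs allowed). Vertices $x,y$ are adjacent if $xy$ or $yx$ is an arc. For $k\ge 2$, $D$ is $k$-quasi-transitive if for every path $x_0x_1\ldots x_k$ of length $k$, $x_0$ and $x_k$ are adjacent. $d(x,y)$ is the length of a shortest $(x,y)$-path, $\mathrm{diam}(D)=\max_{x,y}d(x,y)$. $D[S]$ is the induced subdigraph; a semicomplete digraph is one in which every two distinct vertices are adjacent. *)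

(* Defs.v *)
From mathcomp Require Import all_boot.
Set Implicit Arguments. Unset Strict Implicit. Unset Printing Implicit Defensive.

(* A digraph on a finite vertex type T is an arc relation e : rel T
   (e x y <-> xy is an arc); loops are excluded by the hypothesis irreflexive e.
   Opposite arcs are allowed; multiple arcs are impossible by construction. *)

Definition adjacent (T : finType) (e : rel T) (x y : T) : bool := e x y || e y x.

(* A (directed) path x :: p : consecutive arcs and pairwise distinct vertices.
   Its length is size p, it starts at x and ends at last x p. *)
Definition dpath (T : finType) (e : rel T) (x : T) (p : seq T) : bool :=
  path e x p && uniq (x :: p).

Definition xy_path (T : finType) (e : rel T) (x y : T) (p : seq T) : bool :=
  dpath e x p && (last x p == y).

Definition k_quasi_transitive (T : finType) (e : rel T) (k : nat) : Prop :=
  forall (x : T) (p : seq T), dpath e x p -> size p = k -> adjacent e x (last x p).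

Definition strong (T : finType) (e : rel T) : Prop :=
  forall x y : T, exists p, xy_path e x y p.

Definition dist_is (T : finType) (e : rel T) (x y : T) (n : nat) : Prop :=
  (exists p, xy_path e x y p /\ size p = n) /\
  (forall p, xy_path e x y p -> n <= size p).

Definition diam_ge (T : finType) (e : rel T) (m : nat) : Prop :=
  exists x y n, dist_is e x y n /\ m <= n.

Definition shortest_path (T : finType) (e : rel T) (x y : T) (p : seq T) : Prop :=
  xy_path e x y p /\ (forall q, xy_path e x y q -> size p <= size q).

Definition semicomplete_on (T : finType) (e : rel T) (S : pred T) : Prop :=
  forall x y : T, x \in S -> y \in S -> x != y -> adjacent e x y.

(* Main.v *)
Require Import Defs.
From mathcomp Require Import all_boot zify.
From Stdlib Require Import Classical.
Set Implicit Arguments. Unset Strict Implicit. Unset Printing Implicit Defensive.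

Ltac slia := repeat match goal with
  | H : ?T |- _ => lazymatch T with
      | is_true (leq _ _) => fail
      | is_true (_ && _) => fail
      | @eq nat _ _ => fail
      | nat => fail
      | _ => clear H
      end
  end; lia.

Definition dp {T : eqType} (r : rel T) (a : T) (q : seq T) := path r a q && uniq (a :: q).

Lemma dp_nil (T : eqType) (r : rel T) a : dp r a [::].
Proof. by rewrite /dp /=. Qed.

Lemma dp_cat (T : eqType) (r : rel T) a q1 b q2 :
  dp r a q1 -> dp r b q2 -> r (last a q1) b ->
  (forall y, y \in a :: q1 -> y \in b :: q2 -> False) ->
  dp r a (q1 ++ b :: q2).
Proof.
move=> /andP[p1 u1] /andP[p2 u2] rab dis; apply/andP; split.
  by rewrite cat_path p1 /= rab p2.
rewrite -cat_cons cat_uniq u1 u2 andbT.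
apply/negP => /hasP.
move=> [y yin ya].
by apply: (dis y).
Qed.

Lemma dp_last_cat (T : eqType) a q1 b (q2 : seq T) : last a (q1 ++ b :: q2) = last b q2.
Proof. by rewrite last_cat. Qed.

Lemma dp_map (T U : eqType) (r : rel T) (r' : rel U) (f : T -> U) a q :
  {in a :: q &, injective f} ->
  {in a :: q &, forall i j, r i j -> r' (f i) (f j)} ->
  dp r a q -> dp r' (f a) (map f q).
Proof.
move=> inj hr /andP[p u]; apply/andP; split.
  rewrite path_map; apply: (sub_in_path (P := mem (a :: q)) (e := r)).
  - by move=> i j hi hj /= hij; apply: hr.
  - by apply/allP => y.
  - by [].
by rewrite (map_inj_in_uniq (s := a :: q) inj).
Qed.

Lemma last_take (T : Type) (a : T) q i : i <= size q ->
  last a (take i q) = nth a (a :: q) i.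
Proof.
move=> h; rewrite (last_nth a) size_take.
case: ltnP => h2.
  case: i h h2 => //= i _ h2; rewrite nth_take //.
have -> : i = size q by lia.
rewrite take_size; case: (size q) => //.
Qed.

Lemma dp_seg (T : eqType) (r : rel T) a q i j :
  dp r a q -> i <= j -> j <= size q ->
  dp r (nth a (a :: q) i) (take (j - i) (drop i.+1 (a :: q))) /\
  last (nth a (a :: q) i) (take (j - i) (drop i.+1 (a :: q))) = nth a (a :: q) j /\
  size (take (j - i) (drop i.+1 (a :: q))) = j - i.
Proof.
move=> /andP[p u] hij hj.
have hsz : size (take (j - i) (drop i.+1 (a :: q))) = j - i.
  rewrite size_take size_drop /=; case: ifP => //; lia.
have hdrop : drop i (a :: q) = nth a (a :: q) i :: drop i.+1 (a :: q).
  by rewrite (drop_nth a) //= ; lia.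
split; last split; last exact: hsz.
- rewrite /dp; apply/andP; split.
    have hp2 : path r (last a (take i q)) (drop i q).
      by move: p; rewrite -{1}[q](cat_take_drop i) cat_path => /andP[].
    move: hp2; rewrite last_take; last lia.
    have -> : drop i q = drop i.+1 (a :: q) by [].
    by move/(take_path (j - i)).
  have : uniq (take (j - i).+1 (drop i (a :: q))) by rewrite take_uniq // drop_uniq.
  by rewrite hdrop.
- rewrite (last_nth a) hsz.
  have -> : nth a (nth a (a :: q) i :: take (j - i) (drop i.+1 (a :: q))) (j - i)
          = nth a (take (j - i).+1 (drop i (a :: q))) (j - i) by rewrite hdrop.
  rewrite nth_take // nth_drop; congr nth; lia.
Qed.

Lemma last_iota (a m : nat) : last a (iota a.+1 m) = a + m.
Proof.
elim: m a => [|m IH] a /=; first by rewrite addn0.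
by rewrite IH addSnnS.
Qed.

Lemma iota_dp (r : rel nat) a m :
  (forall t, a <= t -> t < a + m -> r t t.+1) -> dp r a (iota a.+1 m).
Proof.
move=> hr; apply/andP; split; last by have := iota_uniq a m.+1.
elim: m a hr => [|m IH] a hr //=.
rewrite hr ?leqnn //; last by lia.
apply: IH => t h1 h2; apply: hr; lia.
Qed.

Lemma all_iota (P : pred nat) a m : (forall t, a <= t -> t < a + m -> P t) -> all P (iota a m).
Proof. by move=> h; apply/allP => t; rewrite mem_iota => /andP[h1 h2]; apply: h. Qed.

Record setup (T : finType) (e : rel T) (n : nat) (x : nat -> T) : Prop := Setup {
  s_n : 7 <= n;
  s_inj : forall i j, i <= n -> j <= n -> x i = x j -> i = j;
  s_f : forall i, i < n -> e (x i) (x i.+1);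
  s_adj : forall i j, i <= n -> j <= n -> i != j -> adjacent e (x i) (x j);
  s_d : forall a q, dp e a q -> a = x 0 -> last a q = x n -> n <= size q;
  s_k : forall a q, dp e a q -> size q = n - 2 -> adjacent e a (last a q);
  s_s : forall a b, exists q, dp e a q /\ last a q = b
}.

Lemma idx_map (T : finType) (e : rel T) n x (H : setup e n x) (r : rel nat) a l :
  (forall i j, i <= n -> j <= n -> r i j -> e (x i) (x j)) ->
  all (fun i => i <= n) (a :: l) -> dp r a l -> dp e (x a) (map x l).
Proof.
move=> hr /allP hall; apply: dp_map.
- move=> i j hi hj; apply: (s_inj H); [exact: hall | exact: hall].
- move=> i j hi hj; apply: hr; [exact: hall | exact: hall].
Qed.

Lemma mem_seg a m y : y \in a :: iota a.+1 m -> a <= y <= a + m.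
Proof.
have -> : a :: iota a.+1 m = iota a m.+1 by [].
rewrite mem_iota; lia.
Qed.

Lemma s_b (T : finType) (e : rel T) n x (H : setup e n x) i j :
  i.+2 <= j -> j <= n -> e (x j) (x i).
Proof.
move=> hij hj.
have := s_adj H (i := i) (j := j); rewrite /adjacent.
case/(_ _ _ _)/orP => //; try lia.
move=> hx; exfalso.
pose r := fun a b : nat => (b == a.+1) || ((a == i) && (b == j)).
have hd : dp r 0 (iota 1 i ++ j :: iota j.+1 (n - j)).
  apply: dp_cat.
  - by apply: iota_dp => t _ _; rewrite /r eqxx.
  - by apply: iota_dp => t _ _; rewrite /r eqxx.
  - by rewrite last_iota /r add0n !eqxx orbT.
  - move=> y /mem_seg h1 /mem_seg h2; lia.
have hr : forall a b, a <= n -> b <= n -> r a b -> e (x a) (x b).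
  move=> a b ha hb /orP[/eqP hb' | /andP[/eqP -> /eqP ->]] //.
  by subst b; apply: (s_f H); lia.
have hall : all (fun t => t <= n) (0 :: iota 1 i ++ j :: iota j.+1 (n - j)).
  rewrite /= all_cat; apply/andP; split.
    by apply: all_iota => t; lia.
  by rewrite /= hj; apply: all_iota => t; lia.
have hm := idx_map H hr hall hd.
have := s_d H hm erefl.
rewrite size_map size_cat /= size_iota size_iota last_map last_cat /= last_iota.
have -> : j + (n - j) = n by lia.
move=> h; have := h erefl; lia.
Qed.

Definition stepI (i j : nat) := (j == i.+1) || (j.+2 <= i).

Definition IP (n a : nat) (l : seq nat) := dp stepI a l && all (fun t => t <= n) (a :: l).

Lemma IP_seg n a m : a + m <= n -> IP n a (iota a.+1 m).
Proof.
move=> h; apply/andP; split.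
  by apply: iota_dp => t _ _; rewrite /stepI eqxx.
have -> : a :: iota a.+1 m = iota a m.+1 by [].
by apply: all_iota => t; lia.
Qed.

Lemma IP_cat n a l1 b l2 : IP n a l1 -> IP n b l2 -> stepI (last a l1) b ->
  (forall y, y \in a :: l1 -> y \in b :: l2 -> False) -> IP n a (l1 ++ b :: l2).
Proof.
move=> /andP[d1 a1] /andP[d2 a2] hs hdis; apply/andP; split.
  exact: dp_cat.
by move: a1 a2; rewrite /= all_cat /= => /andP[-> ->] /andP[-> ->].
Qed.

Lemma IP_e (T : finType) (e : rel T) n x (H : setup e n x) a l :
  IP n a l -> dp e (x a) (map x l).
Proof.
move=> /andP[d al]; apply: (idx_map H (r := stepI)) => //.
move=> i j hi hj /orP[/eqP hj' | h].
  by subst j; apply: (s_f H); lia.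
exact: (s_b H).
Qed.

Lemma IP_head_le n a l : IP n a l -> a <= n.
Proof. by case/andP=> _ /andP[]. Qed.

Lemma IP_mem n a l y : IP n a l -> y \in a :: l -> y <= n.
Proof. by case/andP=> _ /allP h /h. Qed.

Lemma E1 n b L : 2 <= n -> b <= n -> L <= n ->
  exists a l, IP n a l /\ last a l = b /\ size l = L.
Proof.
move=> hn hb hL.
case: (leqP L b) => hLb.
  exists (b - L), (iota (b - L).+1 L); split; first by apply: IP_seg; lia.
  by rewrite last_iota size_iota; split => //; lia.
pose a := n - (L - 1 - b).
exists a, (iota a.+1 (L - 1 - b) ++ 0 :: iota 1 b); split; last split.
- apply: IP_cat.
  + by apply: IP_seg; rewrite /a; lia.
  + by apply: IP_seg; lia.
  + by rewrite last_iota /stepI /a; apply/orP; right; lia.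
  + by move=> y /mem_seg h1 /mem_seg h2; move: h1; rewrite /a; lia.
- by rewrite last_cat /= last_iota.
- by rewrite size_cat /= !size_iota; lia.
Qed.

Lemma E2 n a L : 2 <= n -> a <= n -> L <= n ->
  exists l, IP n a l /\ size l = L.
Proof.
move=> hn ha hL.
case: (leqP (a + L) n) => haL.
  by exists (iota a.+1 L); split; [apply: IP_seg | rewrite size_iota].
exists (iota a.+1 (n - a) ++ 0 :: iota 1 (L - (n - a) - 1)); split.
- apply: IP_cat.
  + by apply: IP_seg; lia.
  + by apply: IP_seg; lia.
  + by rewrite last_iota /stepI; apply/orP; right; lia.
  + by move=> y /mem_seg h1 /mem_seg h2; lia.
- by rewrite size_cat /= !size_iota; lia.
Qed.

Lemma E3 n a b L : 7 <= n -> b < a -> a <= n -> n <= L + 4 -> L + 3 <= n ->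
  exists l, IP n a l /\ last a l = b /\ size l = L.
Proof.
move=> hn hba ha hL1 hL2.
case: (leqP (a - b) (n + 1 - L)) => hreg.
-
  case: (leqP (a + L - 1) n) => hm.
  + pose e0 := b + 1 - L + (L - 1).
    exists (iota a.+1 (L - 1) ++ b :: iota b.+1 0); split; last split.
    * apply: IP_cat.
      -- by apply: IP_seg; lia.
      -- by apply: IP_seg; lia.
      -- by rewrite last_iota /stepI; apply/orP; right; lia.
      -- by move=> y /mem_seg h1 /mem_seg h2; lia.
    * by rewrite last_cat.
    * by rewrite size_cat size_iota /=; lia.
  + pose e0 := b + (n - a) + 1 - L.
    exists (iota a.+1 (n - a) ++ e0 :: iota e0.+1 (b - e0)); split; last split.
    * apply: IP_cat.
      -- by apply: IP_seg; lia.
      -- by apply: IP_seg; rewrite /e0; lia.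
      -- by rewrite last_iota /stepI /e0; apply/orP; right; lia.
      -- by move=> y /mem_seg h1 /mem_seg h2; move: h2; rewrite /e0; lia.
    * rewrite last_cat /= last_iota /e0; lia.
    * rewrite size_cat size_iota /= size_iota /e0; lia.
-
  pose S := n + 1 + b - L.
  pose c := minn S (n - 2).
  pose e0 := S - c.
  exists (iota a.+1 (n - a) ++ c :: iota c.+1 (a - 1 - c) ++ e0 :: iota e0.+1 (b - e0)).
  split; last split.
  + apply: IP_cat.
    * by apply: IP_seg; lia.
    * apply: IP_cat.
      -- by apply: IP_seg; rewrite /c /S; lia.
      -- by apply: IP_seg; rewrite /e0 /c /S; lia.
      -- by rewrite last_iota /stepI /e0 /c /S; apply/orP; right; lia.
      -- by move=> y /mem_seg h1 /mem_seg h2; move: h1 h2; rewrite /e0 /c /S; lia.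
    * by rewrite last_iota /stepI /c /S; apply/orP; right; lia.
    * move=> y /mem_seg h1; rewrite -cat_cons mem_cat => /orP[/mem_seg h2 | /mem_seg h2];
        move: h1 h2; rewrite /e0 /c /S; lia.
  + rewrite last_cat /= last_cat /= last_iota /e0 /c /S; lia.
  + rewrite size_cat /= size_cat /= !size_iota /e0 /c /S; lia.
Qed.

Lemma dp_rev (T : eqType) (r : rel T) a q :
  dp r a q ->
  dp (fun u v => r v u) (last a q) (rev (belast a q)) /\
  last (last a q) (rev (belast a q)) = a /\ size (rev (belast a q)) = size q.
Proof.
move=> /andP[p u]; split; last split.
- apply/andP; split; first by rewrite rev_path.
  by rewrite -rev_rcons -lastI rev_uniq.
- have := congr1 (fun s => last a (rev s)) (lastI a q).
  rewrite rev_rcons /= => <-.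
  case: q {p u} => //= b q; rewrite rev_cons last_rcons //.
- by rewrite size_rev size_belast.
Qed.

Lemma setup_rev (T : finType) (e : rel T) n x :
  setup e n x -> setup (fun u v => e v u) n (fun i => x (n - i)).
Proof.
move=> H; split.
- exact: (s_n H).
- move=> i j hi hj /(s_inj H) h; have := h (leq_subr _ _) (leq_subr _ _); lia.
- move=> i hi /=.
  have -> : n - i = (n - i.+1).+1 by lia.
  by apply: (s_f H); lia.
- move=> i j hi hj hij; rewrite /adjacent orbC.
  by apply: (s_adj H); try lia.
- move=> a q hd ha hl.
  have [hd' [hl' hs']] := dp_rev hd.
  rewrite -hs'; apply: (s_d H hd').
  + by rewrite hl subnn.
  + by rewrite hl' ha subn0.
- move=> a q hd hs.
  have [hd' [hl' hs']] := dp_rev hd.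
  have := s_k H hd'; rewrite hs' hs hl' => /(_ erefl).
  by rewrite /adjacent orbC.
- move=> a b; have [q [hd hl]] := s_s H b a.
  have [hd' [hl' hs']] := dp_rev hd.
  by exists (rev (belast b q)); rewrite -hl; split.
Qed.

Definition PV (T : Type) n (x : nat -> T) := map x (iota 0 n.+1).

Lemma PV_x (T : eqType) n (x : nat -> T) i : i <= n -> x i \in PV n x.
Proof. by move=> h; apply: map_f; rewrite mem_iota; lia. Qed.

Lemma PV_rev (T : eqType) n (x : nat -> T) y :
  (y \in PV n (fun i => x (n - i))) = (y \in PV n x).
Proof.
apply/mapP/mapP => -[i]; rewrite mem_iota => hi ->.
  by exists (n - i); rewrite // mem_iota; lia.
by exists (n - i); rewrite ?mem_iota; [lia | congr x; lia].
Qed.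

Lemma IP_PV (T : eqType) n (x : nat -> T) a l y :
  IP n a l -> y \in x a :: map x l -> y \in PV n x.
Proof.
move=> hI; rewrite -map_cons => /mapP[t ht ->]; apply: PV_x.
exact: (IP_mem hI ht).
Qed.

Lemma IP_notin (T : eqType) n (x : nat -> T) a l w :
  IP n a l -> w \notin PV n x -> w \notin x a :: map x l.
Proof. by move=> hI hw; apply/negP => /(IP_PV hI); apply/negP. Qed.

Lemma dp_cons (T : eqType) (r : rel T) v w q :
  dp r w q -> r v w -> v \notin w :: q -> dp r v (w :: q).
Proof.
move=> hd hr hv; apply: (dp_cat (q1 := [::])).
- exact: dp_nil.
- exact: hd.
- exact: hr.
- by move=> y; rewrite inE => /eqP -> hy; move/negP: hv.
Qed.

Lemma dp_rcons (T : eqType) (r : rel T) a q z :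
  dp r a q -> r (last a q) z -> z \notin a :: q -> dp r a (q ++ [:: z]).
Proof.
move=> hd hr hz; apply: dp_cat.
- exact: hd.
- exact: dp_nil.
- exact: hr.
- by move=> y hy; rewrite inE => /eqP hyz; subst y; move/negP: hz.
Qed.

Lemma kq_wz (T : finType) (e : rel T) n x (H : setup e n x) w z a l :
  IP n a l -> w \notin PV n x -> z \notin PV n x -> w != z ->
  e w (x a) -> e (x (last a l)) z -> size l = n - 4 -> adjacent e w z.
Proof.
move=> hI hw hz hwz hwa hlz hs.
have hd : dp e w (x a :: map x l ++ [:: z]).
  apply: dp_cons.
  - apply: dp_rcons; first exact: (IP_e H hI).
    + by rewrite last_map.
    + exact: (IP_notin hI hz).
  - exact: hwa.
  - rewrite -cat_cons mem_cat negb_or (IP_notin hI hw) /= inE.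
    exact: hwz.
have := s_k H hd; rewrite /= size_cat size_map hs /=.
rewrite last_cat /=.
have := s_n H; move=> hn h; apply: h; lia.
Qed.

Lemma kq_w (T : finType) (e : rel T) n x (H : setup e n x) w a l :
  IP n a l -> w \notin PV n x ->
  e w (x a) -> size l = n - 3 -> adjacent e w (x (last a l)).
Proof.
move=> hI hw hwa hs.
have hd : dp e w (x a :: map x l).
  apply: dp_cons => //; [exact: (IP_e H hI) | exact: (IP_notin hI hw)].
have := s_k H hd; rewrite /= size_map hs last_map.
have := s_n H; move=> hn h; apply: h; lia.
Qed.

Lemma F1 (T : finType) (e : rel T) n x (H : setup e n x) w a t :
  w \notin PV n x -> e w (x a) -> t < a -> a <= n -> adjacent e w (x t).
Proof.
move=> hw hwa hta ha.
have hn := s_n H.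
have [l [hI [hl hs]]] := E3 (L := n - 3) hn hta ha ltac:(lia) ltac:(lia).
by have := kq_w H hI hw hwa hs; rewrite hl.
Qed.

Lemma F3 (T : finType) (e : rel T) n x (H : setup e n x) w a :
  w \notin PV n x -> e w (x a) -> a <= 3 -> adjacent e w (x (a + (n - 3))).
Proof.
move=> hw hwa ha.
have hn := s_n H.
have hI : IP n a (iota a.+1 (n - 3)) by apply: IP_seg; lia.
have := kq_w H hI hw hwa (size_iota _ _).
by rewrite last_iota.
Qed.

Lemma adj_sym (T : finType) (e : rel T) a b : adjacent e a b = adjacent e b a.
Proof. by rewrite /adjacent orbC. Qed.

Lemma adj_rev (T : finType) (e : rel T) a b :
  adjacent (fun u v => e v u) a b = adjacent e a b.
Proof. by rewrite /adjacent orbC. Qed.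

Lemma F2 (T : finType) (e : rel T) n x (H : setup e n x) w j t :
  w \notin PV n x -> e (x j) w -> j < t -> t <= n -> adjacent e w (x t).
Proof.
move=> hw hjw hjt ht.
have H' := setup_rev H.
have := F1 H' (w := w) (a := n - j) (t := n - t).
rewrite PV_rev adj_rev.
have -> : n - (n - j) = j by lia.
have -> : n - (n - t) = t by lia.
by move=> h; apply: h => //; lia.
Qed.

Lemma F4 (T : finType) (e : rel T) n x (H : setup e n x) w j :
  w \notin PV n x -> e (x j) w -> n - 3 <= j -> j <= n -> adjacent e w (x (j - (n - 3))).
Proof.
move=> hw hjw hj1 hj2.
have H' := setup_rev H.
have := F3 H' (w := w) (a := n - j).
rewrite PV_rev adj_rev.
have -> : n - (n - j) = j by lia.
have -> : n - (n - j + (n - 3)) = j - (n - 3) by lia.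
by move=> h; apply: h => //; lia.
Qed.

Lemma T1 (T : finType) (e : rel T) n x (H : setup e n x) w z a b :
  w \notin PV n x -> z \notin PV n x -> w != z ->
  e w (x a) -> e (x b) z -> b < a -> a <= n -> adjacent e w z.
Proof.
move=> hw hz hwz hwa hbz hba ha.
have hn := s_n H.
have [l [hI [hl hs]]] := E3 (L := n - 4) hn hba ha ltac:(lia) ltac:(lia).
by apply: (kq_wz H hI hw hz hwz hwa _ hs); rewrite hl.
Qed.

Lemma T2 (T : finType) (e : rel T) n x (H : setup e n x) w z a :
  w \notin PV n x -> z \notin PV n x -> w != z ->
  e w (x a) -> e (x (a + (n - 4))) z -> a <= 4 -> adjacent e w z.
Proof.
move=> hw hz hwz hwa hbz ha.
have hn := s_n H.
have hI : IP n a (iota a.+1 (n - 4)) by apply: IP_seg; lia.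
by apply: (kq_wz H hI hw hz hwz hwa _ (size_iota _ _)); rewrite last_iota.
Qed.

Lemma NS (T : finType) (e : rel T) n x (H : setup e n x) w i j :
  w \notin PV n x -> i <= n -> j <= n -> e (x j) w -> e w (x i) -> i <= j.+2.
Proof.
move=> hw hi hj hjw hwi; rewrite leqNgt; apply/negP => hij.
have hI1 : IP n 0 (iota 1 j) by apply: IP_seg; lia.
have hI2 : IP n i (iota i.+1 (n - i)) by apply: IP_seg; lia.
have hd : dp e (x 0) (map x (iota 1 j) ++ w :: x i :: map x (iota i.+1 (n - i))).
  apply: dp_cat.
  - exact: (IP_e H hI1).
  - apply: dp_cons => //; [exact: (IP_e H hI2) | exact: (IP_notin hI2 hw)].
  - by rewrite last_map last_iota.
  - move=> y hy1; rewrite inE => /orP[/eqP hyw | hy2].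
      by subst y; move: hw; rewrite (IP_PV hI1 hy1).
    move: hy1 hy2; rewrite -!map_cons => /mapP[t1 /mem_seg ht1 ->] /mapP[t2 /mem_seg ht2].
    move/(s_inj H); lia.
have := s_d H hd erefl.
rewrite last_cat /= last_map last_iota size_cat /= !size_map !size_iota.
have -> : i + (n - i) = n by lia.
move=> h; have := h erefl; lia.
Qed.

Lemma min_ex (P : nat -> Prop) : (exists m, P m) -> exists m, P m /\ forall m', P m' -> m <= m'.
Proof.
case=> m hm; elim: m {-2}m (leqnn m) hm => [|N IH] m hmN hm.
  by exists m; split => // m' _; lia.
case: (Classical_Prop.classic (exists m', P m' /\ m' < m)) => [[m' [hm' hlt]] | hno].
  by apply: (IH m') => //; lia.
exists m; split => // m' hm'; rewrite leqNgt; apply/negP => hlt.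
by apply: hno; exists m'.
Qed.

Lemma dp_app (T : eqType) (r : rel T) a q1 q2 :
  dp r a q1 -> dp r (last a q1) q2 ->
  (forall y, y \in a :: q1 -> y \in q2 -> False) -> dp r a (q1 ++ q2).
Proof.
move=> /andP[p1 u1] /andP[p2 u2] hdis; apply/andP; split.
  by rewrite cat_path p1 p2.
rewrite -cat_cons cat_uniq u1 /=; apply/andP; split; last by case/andP: u2.
apply/negP => /hasP [y yin ya]; exact: (hdis y ya yin).
Qed.

Lemma dp_step (T : eqType) (r : rel T) a q i :
  dp r a q -> i < size q -> r (nth a (a :: q) i) (nth a (a :: q) i.+1).
Proof. by case/andP=> /(pathP a) h _ /h. Qed.

Lemma dp_nth_inj (T : eqType) (r : rel T) a q i j :
  dp r a q -> i <= size q -> j <= size q -> nth a (a :: q) i = nth a (a :: q) j -> i = j.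
Proof.
case/andP=> _ u hi hj /eqP; rewrite nth_uniq //= ?ltnS //.
by move/eqP.
Qed.

Lemma mem_seg_nth (T : eqType) (a : T) q i j y :
  i <= j -> j <= size q ->
  y \in nth a (a :: q) i :: take (j - i) (drop i.+1 (a :: q)) ->
  exists2 t, i <= t <= j & y = nth a (a :: q) t.
Proof.
move=> hij hj.
have -> : nth a (a :: q) i :: take (j - i) (drop i.+1 (a :: q)) =
          take (j - i).+1 (drop i (a :: q)).
  have hdrop : drop i (a :: q) = nth a (a :: q) i :: drop i.+1 (a :: q).
    by rewrite (drop_nth a) //= ; lia.
  by rewrite hdrop.
move/(nthP a) => [t ht <-].
move: ht; rewrite size_take size_drop /= => ht.
exists (i + t); first by move: ht; case: ifP => hh; lia.
rewrite nth_take; last by move: ht; case: ifP => hh; lia.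
by rewrite nth_drop.
Qed.

Lemma mem_nth_dp (T : eqType) (a : T) q y :
  y \in q -> exists2 t, 0 < t <= size q & y = nth a (a :: q) t.
Proof.
move/(nthP a) => [t ht <-]; exists t.+1 => //; lia.
Qed.

Definition reach (T : finType) (e : rel T) n (x : nat -> T) (y : T) (m : nat) :=
  exists a q, [/\ dp e a q, a \in PV n x, last a q = y & size q = m].

Lemma reach_ex (T : finType) (e : rel T) n x (H : setup e n x) y :
  exists m, reach e n x y m.
Proof.
have [q [hd hl]] := s_s H (x 0) y.
by exists (size q), (x 0), q; split => //; apply: PV_x.
Qed.

Lemma reach_min (T : finType) (e : rel T) n x (H : setup e n x) y :
  exists d, reach e n x y d /\ forall d', reach e n x y d' -> d <= d'.
Proof. exact: min_ex (reach_ex H y). Qed.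

Lemma chain_out (T : finType) (e : rel T) n x y d a q :
  dp e a q -> last a q = y -> size q = d ->
  (forall d', reach e n x y d' -> d <= d') ->
  forall u, u \in q -> u \notin PV n x.
Proof.
move=> hd hl hs hmin u /(mem_nth_dp a) [t ht ->].
apply/negP => hP.
have [hd' [hl' hs']] := dp_seg hd (i := t) (j := size q) ltac:(lia) (leqnn _).
have : d <= size q - t.
  apply: hmin; exists (nth a (a :: q) t), (take (size q - t) (drop t.+1 (a :: q))).
  split => //; rewrite hl' -hl (last_nth a) //.
lia.
Qed.

Lemma PV_inv (T : eqType) n (x : nat -> T) y : y \in PV n x -> exists2 i, i <= n & y = x i.
Proof. by case/mapP=> i; rewrite mem_iota => hi ->; exists i => //; lia. Qed.

Lemma AdjP (T : finType) (e : rel T) n x (H : setup e n x) :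
  forall N d y, d <= N -> y \notin PV n x -> reach e n x y d ->
  (forall d', reach e n x y d' -> d <= d') -> exists2 i, i <= n & adjacent e y (x i).
Proof.
have hn := s_n H.
elim=> [|N IH] d y hdN hy [a [q [hd haP hl hs]]] hmin.
  have hq : q = [::] by apply/size0nil; slia.
  by subst q; move: hy; rewrite -hl /= haP.
have hd1 : 0 < d.
  case: d hdN hs hmin => // _ hs0 _; have hq : q = [::] by apply/size0nil.
  by subst q; move: hy; rewrite -hl /= haP.
have hout := chain_out hd hl hs hmin.
have [b hb hab] := PV_inv haP.
case: (leqP d (n - 2)) => hdk.
- have [a0 [l0 [hI [hl0 hs0]]]] := E1 (L := n - 2 - d) (n := n) ltac:(slia) hb ltac:(slia).
  have hdd : dp e (x a0) (map x l0 ++ q).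
    apply: dp_app; first exact: (IP_e H hI).
    - by rewrite last_map hl0 -hab.
    - move=> u hu1 hu2; have := hout u hu2; by rewrite (IP_PV hI hu1).
  have := s_k H hdd; rewrite size_cat size_map hs0 hs last_cat last_map hl0 -hab hl.
  move=> h; exists a0; first exact: (IP_head_le hI).
  by rewrite adj_sym; apply: h; slia.
- pose t := d - (n - 2).
  have ht1 : 1 <= t by rewrite /t; slia.
  have htd : t.+1 < d by rewrite /t; slia.
  pose s := a :: q.
  pose vt := nth a s t.
  pose v1 := nth a s t.+1.
  have hyd : y = nth a s d by rewrite -hl (last_nth a) hs.
  have hvtq : vt \in q.
    rewrite /vt /s; have -> : t = (t - 1).+1 by slia.
    by rewrite /=; apply: mem_nth; slia.
  have hv1q : v1 \in q by rewrite /v1 /s /=; apply: mem_nth; slia.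
  have hvt := hout _ hvtq.
  have hv1 := hout _ hv1q.
  have [hd1' [hl1' hs1']] := dp_seg hd (i := t) (j := d) ltac:(slia) ltac:(slia).
  have hadj1 := s_k H hd1'.
  rewrite hl1' hs1' -hyd in hadj1.
  have hyvt : e y vt.
    move: (hadj1 ltac:(rewrite /t; slia)); rewrite /adjacent => /orP[h|//].
    exfalso.
    have [hd0 [hl0 hs0]] := dp_seg hd (i := 0) (j := t) ltac:(slia) ltac:(slia).
    have hr : reach e n x y t.+1.
      exists (nth a (a :: q) 0), (take (t - 0) (drop 1 (a :: q)) ++ [:: y]); split.
      + apply: dp_rcons => //; first by rewrite hl0.
        apply/negP => /mem_seg_nth h2; have [t' ht' hyt'] := h2 ltac:(slia) ltac:(slia).
        rewrite hyd in hyt'; have := dp_nth_inj hd (i := d) (j := t') ltac:(slia) ltac:(slia) hyt'; slia.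
      + by [].
      + by rewrite last_cat.
      + by rewrite size_cat hs0 /=; slia.
    have := hmin _ hr; slia.
  have hvtv1 : e vt v1 := dp_step (i := t) hd ltac:(slia).
  have [d1 [hr1 hmin1]] := reach_min H v1.
  have hd1le : d1 <= t.+1.
    apply: hmin1.
    have [hd2 [hl2 hs2]] := dp_seg hd (i := 0) (j := t.+1) ltac:(slia) ltac:(slia).
    by exists (nth a (a :: q) 0), (take (t.+1 - 0) (drop 1 (a :: q))); split.
  have [c hc hadjc] := IH d1 v1 ltac:(slia) hv1 hr1 hmin1.
  have hv1c : e v1 (x c).
    move: hadjc; rewrite /adjacent => /orP[//|h]; exfalso.
    have [hd3 [hl3 hs3]] := dp_seg hd (i := t.+1) (j := d) ltac:(slia) ltac:(slia).
    have hr : reach e n x y (d - t).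
      exists (x c), (nth a (a :: q) t.+1 :: take (d - t.+1) (drop t.+2 (a :: q))); split.
      + apply: dp_cons => //.
        apply/negP => /mem_seg_nth h2; have [t' ht' hct'] := h2 ltac:(slia) ltac:(slia).
        have hq' : nth a (a :: q) t' \in q.
          case: t' ht' hct' => [|t'] ht' hct'; first slia.
          by rewrite /=; apply: mem_nth; slia.
        by move: (hout _ hq'); rewrite -hct' PV_x.
      + exact: PV_x.
      + by rewrite /= hl3 -hyd.
      + by rewrite /= hs3; slia.
    have := hmin _ hr; slia.
  have [l [hI hsl]] := E2 (n := n) (L := n - 5) ltac:(slia) hc ltac:(slia).
  have hdd : dp e y (vt :: v1 :: x c :: map x l).
    have hvtv1n : vt != v1.
      apply/eqP => h; have := dp_nth_inj hd (i := t) (j := t.+1) ltac:(slia) ltac:(slia) h; slia.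
    have hyvtn : y != vt.
      apply/eqP; rewrite hyd => h; have := dp_nth_inj hd (i := d) (j := t) ltac:(slia) ltac:(slia) h; slia.
    have hyv1n : y != v1.
      apply/eqP; rewrite hyd => h; have := dp_nth_inj hd (i := d) (j := t.+1) ltac:(slia) ltac:(slia) h; slia.
    apply: dp_cons; last first.
    - rewrite !inE negb_or hyvtn negb_or hyv1n /=.
      exact: (IP_notin hI hy).
    - exact: hyvt.
    apply: dp_cons; last first.
    - rewrite !inE negb_or hvtv1n /=.
      exact: (IP_notin hI hvt).
    - exact: hvtv1.
    apply: dp_cons => //; [exact: (IP_e H hI) | exact: (IP_notin hI hv1)].
  have := s_k H hdd; rewrite /= size_map hsl => h.
  exists (last c l); first by apply: (IP_mem hI); rewrite mem_last.
  have := h ltac:(slia); by rewrite last_map.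
Qed.

Lemma adj_out (T : finType) (e : rel T) a b : adjacent e a b -> ~~ e b a -> e a b.
Proof. by rewrite /adjacent => /orP[//| ->]. Qed.

Lemma AllOut (T : finType) (e : rel T) n x (H : setup e n x) y :
  y \notin PV n x -> (forall i, i <= n -> ~~ e (x i) y) -> forall i, i <= n -> e y (x i).
Proof.
move=> hy hin.
have hn := s_n H.
have [d [hr hmin]] := reach_min H y.
have [s hs hadj] := AdjP H (leqnn d) hy hr hmin.
have ob : forall a t, t < a -> a <= n -> e y (x a) -> e y (x t).
  move=> a t hta ha hya; apply: adj_out; last by apply: hin; slia.
  exact: (F1 H hy hya hta ha).
have hys : e y (x s) by apply: adj_out => //; apply: hin.
have hy0 : e y (x 0).
  by case: s hs hadj hys => [//| s] hs _ hys; apply: (ob s.+1).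
have hy3 : e y (x (n - 3)).
  apply: adj_out; last by apply: hin; slia.
  by have := F3 H hy hy0 (leq0n _).
have hy4 : e y (x 3) by apply: (ob (n - 3)) => //; slia.
have hyn : e y (x n).
  apply: adj_out; last by apply: hin.
  have := F3 H hy hy4 (leqnn _).
  by have -> : 3 + (n - 3) = n by slia.
move=> i hi; case: (ltnP i n) => hin'; first by apply: (ob n).
by have -> : i = n by slia.
Qed.

Lemma AllIn (T : finType) (e : rel T) n x (H : setup e n x) y :
  y \notin PV n x -> (forall i, i <= n -> ~~ e y (x i)) -> forall i, i <= n -> e (x i) y.
Proof.
move=> hy hout i hi.
have H' := setup_rev H.
have := AllOut H' (y := y) _ _ (i := n - i).
have -> : n - (n - i) = i by slia.
apply; [by rewrite PV_rev | | slia].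
by move=> j hj /=; apply: hout; slia.
Qed.

Lemma CaseIII (T : finType) (e : rel T) n x (H : setup e n x) w z b :
  w \notin PV n x -> z \notin PV n x -> w != z ->
  (forall i, i <= n -> ~~ e (x i) w) -> b <= n -> e (x b) z -> adjacent e w z.
Proof.
move=> hw hz hwz hin hb hbz.
have hn := s_n H.
have [a0 [l0 [hI [hl0 hs0]]]] := E1 (L := n - 4) (n := n) ltac:(slia) hb ltac:(slia).
apply: (kq_wz H hI hw hz hwz _ _ hs0).
- by apply: (AllOut H hw hin); exact: (IP_head_le hI).
- by rewrite hl0.
Qed.

Lemma CaseIIIr (T : finType) (e : rel T) n x (H : setup e n x) w z b :
  w \notin PV n x -> z \notin PV n x -> w != z ->
  (forall i, i <= n -> ~~ e w (x i)) -> b <= n -> e z (x b) -> adjacent e w z.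
Proof.
move=> hw hz hwz hout hb hzb.
have H' := setup_rev H.
rewrite -adj_rev; apply: (CaseIII H' (b := n - b)); rewrite ?PV_rev //.
- by move=> i hi /=; apply: hout; slia.
- slia.
- by rewrite /= (_ : n - (n - b) = b) //; slia.
Qed.

Lemma exmax (P : pred nat) n : (exists a, a <= n /\ P a) ->
  exists A, [/\ A <= n, P A & forall a, a <= n -> P a -> a <= A].
Proof.
move=> hex.
have hex' : exists a, (fun a => (a <= n) && P a) a by case: hex => a [h1 h2]; exists a; rewrite h1.
have hub : forall a, (fun a => (a <= n) && P a) a -> a <= n by move=> a /andP[].
case: (ex_maxnP hex' hub) => A /andP[h1 h2] hmax.
by exists A; split => // a ha hPa; apply: hmax; rewrite ha.
Qed.

Lemma exmin (P : pred nat) n : (exists a, a <= n /\ P a) ->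
  exists B, [/\ B <= n, P B & forall a, a <= n -> P a -> B <= a].
Proof.
move=> hex.
have hex' : exists a, (fun a => (a <= n) && P a) a by case: hex => a [h1 h2]; exists a; rewrite h1.
case: (ex_minnP hex') => B /andP[h1 h2] hmin.
by exists B; split => // a ha hPa; apply: hmin; rewrite ha.
Qed.

Lemma CaseIV_wlog (T : finType) (e : rel T) n x (H : setup e n x) w z A B A' B' :
  w \notin PV n x -> z \notin PV n x -> w != z -> ~~ adjacent e w z ->
  A <= n -> e w (x A) -> (forall a, a <= n -> e w (x a) -> a <= A) ->
  B <= n -> e (x B) w -> (forall b, b <= n -> e (x b) w -> B <= b) ->
  A' <= n -> e z (x A') -> (forall a, a <= n -> e z (x a) -> a <= A') ->
  B' <= n -> e (x B') z -> (forall b, b <= n -> e (x b) z -> B' <= b) ->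
  A <= A' -> False.
Proof.
move=> hw hz hwz hna hA hwA hAmax hB hBw hBmin hA' hzA' hA'max hB' hB'z hB'min hAA'.
have hn := s_n H.
have hzw : z != w by rewrite eq_sym.
have hna' : ~~ adjacent e z w by rewrite adj_sym.
have T1c : forall a b, a <= n -> b <= n -> e w (x a) -> e (x b) z -> a <= b.
  move=> a b ha hb h1 h2; rewrite leqNgt; apply/negP => hlt.
  by move/negP: hna; apply; apply: (T1 H hw hz hwz h1 h2).
have T1c' : forall a b, a <= n -> b <= n -> e z (x a) -> e (x b) w -> a <= b.
  move=> a b ha hb h1 h2; rewrite leqNgt; apply/negP => hlt.
  by move/negP: hna'; apply; apply: (T1 H hz hw hzw h1 h2).
have T2c : forall a, a <= 4 -> e w (x a) -> e (x (a + (n - 4))) z -> False.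
  by move=> a ha h1 h2; move/negP: hna; apply; apply: (T2 H hw hz hwz h1 h2).
have T2c' : forall a, a <= 4 -> e z (x a) -> e (x (a + (n - 4))) w -> False.
  by move=> a ha h1 h2; move/negP: hna'; apply; apply: (T2 H hz hw hzw h1 h2).
have hAB' := T1c _ _ hA hB' hwA hB'z.
have hA'B := T1c' _ _ hA' hB hzA' hBw.
have s2a : forall t, t <= A -> e w (x t).
  move=> t ht; case: (ltnP t A) => htA; last by have -> : t = A by slia.
  apply: adj_out; first exact: (F1 H hw hwA htA hA).
  by apply/negP => h; have := hBmin t ltac:(slia) h; slia.
have s2b : forall t, B <= t -> t <= n -> e (x t) w.
  move=> t ht1 ht2; case: (ltnP B t) => htB; last by have -> : t = B by slia.
  apply: adj_out.
    by rewrite adj_sym; exact: (F2 H hw hBw htB ht2).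
  by apply/negP => h; have := hAmax t ht2 h; slia.
have s3 : e z (x 0).
  have hadj : adjacent e z (x 0).
    case: (posnP A') => hA'0; first by rewrite /adjacent -hA'0 hzA'.
    exact: (F1 H hz hzA' hA'0 hA').
  case/orP: hadj => // h0z; exfalso.
  have hB'0 := hB'min 0 (leq0n _) h0z.
  have hw0 := s2a 0 (leq0n _).
  have hadj2 := F2 H hz h0z (t := n - 4) ltac:(slia) ltac:(slia).
  case/orP: hadj2 => h4.
    by have := NS H (i := n - 4) (j := 0) hz ltac:(slia) (leq0n _) h0z h4; slia.
  by apply: (T2c 0 (leq0n _) hw0); rewrite add0n.
have s4 : e (x n) z.
  have hadj : adjacent e z (x n).
    case: (ltnP B' n) => hB'n.
      exact: (F2 H hz hB'z hB'n (leqnn _)).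
    have hBn' : B' = n by slia.
    by rewrite /adjacent -hBn' hB'z orbT.
  case/orP: hadj => // hzn; exfalso.
  have hA'n := hA'max n (leqnn _) hzn.
  have hBn : B = n by slia.
  have hnw : e (x n) w by rewrite -hBn.
  have hns := NS H hz (leqnn _) hB' hB'z hzn.
  have hadj4 := F1 H hz hzn (t := 4) ltac:(slia) (leqnn _).
  case/orP: hadj4 => h4.
    by apply: (T2c' 4 (leqnn _) h4); rewrite (_ : 4 + (n - 4) = n) //; slia.
  by have := hB'min 4 ltac:(slia) h4; slia.
have s5 : A <= 3.
  rewrite leqNgt; apply/negP => hA4.
  by apply: (T2c 4 (leqnn _) (s2a 4 ltac:(slia))); rewrite (_ : 4 + (n - 4) = n) //; slia.
have s6 : B <= n - 3.
  have := F3 H hw (s2a 0 (leq0n _)) (leq0n _); rewrite add0n.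
  case/orP => h.
    by have := hAmax (n - 3) ltac:(slia) h; slia.
  exact: (hBmin (n - 3) ltac:(slia) h).
have s7 : n - 3 <= B.
  rewrite leqNgt; apply/negP => hB4.
  by apply: (T2c' 0 (leq0n _) s3); rewrite add0n; apply: s2b; slia.
have s8 : 3 <= A.
  have := F4 H hw (s2b n ltac:(slia) (leqnn _)) ltac:(slia) (leqnn _).
  rewrite (_ : n - (n - 3) = 3); last by slia.
  case/orP => h; first exact: (hAmax 3 ltac:(slia) h).
  by have := hBmin 3 ltac:(slia) h; slia.
have := F1 H hz hzA' (t := 1) ltac:(slia) hA'.
case/orP => h.
  by apply: (T2c' 1 ltac:(slia) h); apply: s2b; slia.
by have := hB'min 1 ltac:(slia) h; slia.
Qed.

Lemma CaseIV (T : finType) (e : rel T) n x (H : setup e n x) w z :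
  w \notin PV n x -> z \notin PV n x -> w != z ->
  (exists a, a <= n /\ e w (x a)) -> (exists b, b <= n /\ e (x b) w) ->
  (exists a, a <= n /\ e z (x a)) -> (exists b, b <= n /\ e (x b) z) ->
  adjacent e w z.
Proof.
move=> hw hz hwz h1 h2 h3 h4.
case: (boolP (adjacent e w z)) => // hna; exfalso.
have [A [hA hwA hAm]] := exmax (P := fun a => e w (x a)) h1.
have [B [hB hBw hBm]] := exmin (P := fun b => e (x b) w) h2.
have [A' [hA' hzA' hA'm]] := exmax (P := fun a => e z (x a)) h3.
have [B' [hB' hB'z hB'm]] := exmin (P := fun b => e (x b) z) h4.
case: (leqP A A') => hAA'.
  exact: (CaseIV_wlog H hw hz hwz hna hA hwA hAm hB hBw hBm hA' hzA' hA'm hB' hB'z hB'm hAA').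
have hzw : z != w by rewrite eq_sym.
have hna' : ~~ adjacent e z w by rewrite adj_sym.
exact: (CaseIV_wlog H hz hw hzw hna' hA' hzA' hA'm hB' hB'z hB'm hA hwA hAm hB hBw hBm (ltnW hAA')).
Qed.

Lemma CaseI (T : finType) (e : rel T) n x (H : setup e n x) w z d :
  w \notin PV n x -> z \notin PV n x -> w != z ->
  (forall i, i <= n -> ~~ e (x i) w) -> (forall i, i <= n -> ~~ e (x i) z) ->
  reach e n x w d -> (forall d', reach e n x w d' -> d <= d') ->
  (forall m, reach e n x z m -> d <= m) -> adjacent e w z.
Proof.
move=> hw hz hwz hinw hinz [a [q [hd haP hl hs]]] hminw hminz.
have hn := s_n H.
case: (boolP (adjacent e w z)) => // hna; exfalso.
have hout := chain_out hd hl hs hminw.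
have [b hb hab] := PV_inv haP.
have hd1 : 0 < d.
  case: d hs hminw hminz => // hs0 _ _; have hq : q = [::] by apply/size0nil.
  by subst q; move: hw; rewrite -hl /= haP.
have [a0 [l0 [hI [hl0 hs0]]]] := E1 (L := n - 2) (n := n) ltac:(slia) hb ltac:(slia).
pose y0 := x a0.
pose Yt := map x l0 ++ q.
have hY : dp e y0 Yt.
  apply: dp_app; first exact: (IP_e H hI).
  - by rewrite last_map hl0 -hab.
  - move=> u hu1 hu2; have := hout u hu2; by rewrite (IP_PV hI hu1).
have hYs : size Yt = n - 2 + d by rewrite /Yt size_cat size_map hs0 hs.
pose M := n - 2 + d.
pose Y i := nth y0 (y0 :: Yt) i.
have hYcat : y0 :: Yt = (x a0 :: map x l0) ++ q by [].
have Y1 : forall i, i <= n - 2 -> Y i \in PV n x.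
  move=> i hi; rewrite /Y hYcat nth_cat /= size_map hs0 ifT; last by slia.
  apply: (IP_PV hI); rewrite -/y0; apply: mem_nth; rewrite /= size_map hs0; slia.
have Y2 : forall i, n - 2 <= i -> i <= M -> Y i = nth a (a :: q) (i - (n - 2)).
  move=> i hi1 hi2; rewrite /Y hYcat nth_cat /= size_map hs0.
  case: (ltnP i (n - 2).+1) => hi3.
    have hi : i = n - 2 by slia.
    rewrite hi subnn /=.
    have := last_nth y0 (x a0) (map x l0); rewrite size_map hs0 last_map hl0 -hab.
    by move=> <-.
  have -> : i - (n - 2) = (i - (n - 2).+1).+1 by slia.
  by rewrite /= (set_nth_default a) //; slia.
have hYM : Y M = w.
  by rewrite /Y /M -hYs -(last_nth y0) /Yt last_cat last_map hl0 -hab hl.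
have hwd : w = nth a (a :: q) d by rewrite -hl (last_nth a) hs.
have Yinj : forall i j, i <= M -> j <= M -> Y i = Y j -> i = j.
  by move=> i j hi hj h; apply: (dp_nth_inj hY); rewrite ?hYs.
have noin : forall i, i <= M - 2 -> ~~ e (Y i) w.
  move=> i hi; case: (leqP i (n - 2)) => hik.
    by have [j hj ->] := PV_inv (Y1 i hik); apply: hinw.
  rewrite Y2; [|slia|slia].
  apply/negP => hcw.
  pose j := i - (n - 2).
  have [hd0 [hl0' hs0']] := dp_seg hd (i := 0) (j := j) ltac:(slia) ltac:(rewrite hs /j; slia).
  have hr : reach e n x w j.+1.
    exists (nth a (a :: q) 0), (take (j - 0) (drop 1 (a :: q)) ++ [:: w]); split => //.
    + apply: dp_rcons => //; first by rewrite hl0'.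
      apply/negP => /mem_seg_nth h2; have [t' ht' hyt'] := h2 ltac:(slia) ltac:(rewrite hs /j; slia).
      rewrite hwd in hyt'.
      have := dp_nth_inj hd (i := d) (j := t') ltac:(slia) ltac:(rewrite hs; slia) hyt'; rewrite /j; slia.
    + by rewrite last_cat.
    + by rewrite size_cat hs0' /=; slia.
  have := hminw _ hr; rewrite /j; slia.
have wnot : forall j i, j <= i -> i < M ->
    w \notin nth y0 (y0 :: Yt) j :: take (i - j) (drop j.+1 (y0 :: Yt)).
  move=> j i hji hiM; apply/negP => /mem_seg_nth h2.
  have [t' ht' hyt'] := h2 hji ltac:(rewrite hYs; slia).
  rewrite -hYM in hyt'; have := Yinj M t' (leqnn _) ltac:(slia) hyt'; slia.
have znot : forall t, t <= M -> Y t != z.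
  move=> t ht; apply/eqP => hzt.
  case: (leqP t (n - 2)) => htk.
    by move: hz; rewrite -hzt Y1.
  move: hzt; rewrite Y2; [|slia|slia] => hzt.
  case: (ltnP (t - (n - 2)) d) => htd.
    have [hd0 [hl0' hs0']] := dp_seg hd (i := 0) (j := t - (n - 2)) ltac:(slia) ltac:(rewrite hs; slia).
    have hr : reach e n x z (t - (n - 2)).
      exists (nth a (a :: q) 0), (take (t - (n - 2) - 0) (drop 1 (a :: q))); split => //.
      + by rewrite hl0'.
      + by rewrite hs0' subn0.
    by have := hminz _ hr; slia.
  have htd' : t - (n - 2) = d by slia.
  by move/eqP: hwz; apply; rewrite hwd -hzt htd'.
have znot' : forall j i, j <= i -> i <= M ->
    z \notin nth y0 (y0 :: Yt) j :: take (i - j) (drop j.+1 (y0 :: Yt)).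
  move=> j i hji hiM; apply/negP => /mem_seg_nth h2.
  have [t' ht' hyt'] := h2 hji ltac:(rewrite hYs; slia).
  by move/negP: (znot t' ltac:(slia)); apply; rewrite /Y -hyt'.
have W : forall N i, i <= N -> i <= M - 2 -> e w (Y i).
  elim=> [|N IH] i hiN hiM.
    have [j hj ->] := PV_inv (Y1 i ltac:(slia)).
    by apply: (AllOut H hw hinw).
  case: (leqP i (n - 2)) => hik.
    have [j hj ->] := PV_inv (Y1 i hik).
    by apply: (AllOut H hw hinw).
  pose j := i - (n - 3).
  have hwj : e w (Y j) by apply: IH; rewrite /j; slia.
  have [hd2 [hl2 hs2]] := dp_seg hY (i := j) (j := i) ltac:(rewrite /j; slia) ltac:(rewrite hYs; slia).
  have hdd : dp e w (nth y0 (y0 :: Yt) j :: take (i - j) (drop j.+1 (y0 :: Yt))).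
    apply: dp_cons => //; apply: wnot; rewrite /j; slia.
  have := s_k H hdd; rewrite /= hs2 hl2 => h.
  apply: adj_out; first by apply: h; rewrite /j; slia.
  exact: noin.
have Z : forall N i, i <= N -> i <= M - 1 -> e z (Y i).
  elim=> [|N IH] i hiN hiM.
    have [j hj ->] := PV_inv (Y1 i ltac:(slia)).
    by apply: (AllOut H hz hinz).
  case: (leqP i (n - 2)) => hik.
    have [j hj ->] := PV_inv (Y1 i hik).
    by apply: (AllOut H hz hinz).
  pose j := i - (n - 3).
  have hzj : e z (Y j) by apply: IH; rewrite /j; slia.
  have [hd2 [hl2 hs2]] := dp_seg hY (i := j) (j := i) ltac:(rewrite /j; slia) ltac:(rewrite hYs; slia).
  have hdd : dp e z (nth y0 (y0 :: Yt) j :: take (i - j) (drop j.+1 (y0 :: Yt))).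
    apply: dp_cons => //; apply: znot'; rewrite /j; slia.
  have := s_k H hdd; rewrite /= hs2 hl2 => h.
  apply: adj_out; first by apply: h; rewrite /j; slia.
  apply/negP => hiz.
  pose j2 := i - (n - 4).
  have hwj2 : e w (Y j2) by apply: (W j2); rewrite /j2; slia.
  have [hd3 [hl3 hs3]] := dp_seg hY (i := j2) (j := i) ltac:(rewrite /j2; slia) ltac:(rewrite hYs; slia).
  have hdd2 : dp e w (nth y0 (y0 :: Yt) j2 :: take (i - j2) (drop j2.+1 (y0 :: Yt)) ++ [:: z]).
    apply: dp_cons => //.
    - apply: dp_rcons => //; first by rewrite hl3.
      apply: znot'; rewrite /j2; slia.
    - rewrite -cat_cons mem_cat mem_seq1 (negbTE hwz) orbF.
      apply: wnot; rewrite /j2; slia.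
  have := s_k H hdd2; rewrite /= size_cat hs3 /= last_cat /= => h2.
  by move/negP: hna; apply; apply: h2; rewrite /j2; slia.
pose j := M - (n - 3).
have hzj : e z (Y j) by apply: (Z j); rewrite /j /M; slia.
have [hd2 [hl2 hs2]] := dp_seg hY (i := j) (j := M) ltac:(rewrite /j; slia) ltac:(rewrite hYs; slia).
have hdd : dp e z (nth y0 (y0 :: Yt) j :: take (M - j) (drop j.+1 (y0 :: Yt))).
  apply: dp_cons => //; apply: znot'; rewrite /j; slia.
have := s_k H hdd; rewrite /= hs2 hl2 => h.
move/negP: hna; apply; rewrite adj_sym.
have := h ltac:(rewrite /j /M; slia); by rewrite -/(Y M) hYM.
Qed.

Lemma Case1 (T : finType) (e : rel T) n x (H : setup e n x) w z :
  w \notin PV n x -> z \notin PV n x -> w != z ->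
  (forall i, i <= n -> ~~ e (x i) w) -> (forall i, i <= n -> ~~ e (x i) z) ->
  adjacent e w z.
Proof.
move=> hw hz hwz hinw hinz.
have [dw [hrw hmw]] := reach_min H w.
have [dz [hrz hmz]] := reach_min H z.
case: (leqP dw dz) => hd.
  apply: (CaseI H hw hz hwz hinw hinz hrw hmw).
  by move=> m hm; apply: leq_trans hd (hmz _ hm).
rewrite adj_sym; apply: (CaseI H hz hw _ hinz hinw hrz hmz); first by rewrite eq_sym.
by move=> m hm; apply: leq_trans (ltnW hd) (hmw _ hm).
Qed.

Lemma hasIn_no (T : finType) (e : rel T) n (x : nat -> T) w :
  ~~ has (fun i => e (x i) w) (iota 0 n.+1) -> forall i, i <= n -> ~~ e (x i) w.
Proof.
move=> h i hi; apply/negP => hiw; move/negP: h; apply; apply/hasP.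
by exists i => //; rewrite mem_iota; slia.
Qed.

Lemma hasIn_yes (T : finType) (e : rel T) n (x : nat -> T) w :
  has (fun i => e (x i) w) (iota 0 n.+1) -> exists b, b <= n /\ e (x b) w.
Proof. by case/hasP=> i; rewrite mem_iota => hi h; exists i; split => //; slia. Qed.

Lemma hasOut_no (T : finType) (e : rel T) n (x : nat -> T) w :
  ~~ has (fun i => e w (x i)) (iota 0 n.+1) -> forall i, i <= n -> ~~ e w (x i).
Proof.
move=> h i hi; apply/negP => hiw; move/negP: h; apply; apply/hasP.
by exists i => //; rewrite mem_iota; slia.
Qed.

Lemma hasOut_yes (T : finType) (e : rel T) n (x : nat -> T) w :
  has (fun i => e w (x i)) (iota 0 n.+1) -> exists b, b <= n /\ e w (x b).
Proof. by case/hasP=> i; rewrite mem_iota => hi h; exists i; split => //; slia. Qed.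

Lemma main_setup (T : finType) (e : rel T) n x (H : setup e n x) w z :
  w \notin PV n x -> z \notin PV n x -> w != z -> adjacent e w z.
Proof.
move=> hw hz hwz.
have hzw : z != w by rewrite eq_sym.
case: (boolP (has (fun i => e (x i) w) (iota 0 n.+1))) => hiw;
case: (boolP (has (fun i => e (x i) z) (iota 0 n.+1))) => hiz.
- case: (boolP (has (fun i => e w (x i)) (iota 0 n.+1))) => how;
  case: (boolP (has (fun i => e z (x i)) (iota 0 n.+1))) => hoz.
  + exact: (CaseIV H hw hz hwz (hasOut_yes how) (hasIn_yes hiw) (hasOut_yes hoz) (hasIn_yes hiz)).
  + have [b [hb hbz]] := hasOut_yes how.
    by rewrite adj_sym; apply: (CaseIIIr H hz hw hzw (hasOut_no hoz) hb hbz).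
  + have [b [hb hbz]] := hasOut_yes hoz.
    exact: (CaseIIIr H hw hz hwz (hasOut_no how) hb hbz).
  + have H' := setup_rev H.
    rewrite -adj_rev; apply: (Case1 H'); rewrite ?PV_rev //.
    * by move=> i hi /=; apply: (hasOut_no how); apply: leq_subr.
    * by move=> i hi /=; apply: (hasOut_no hoz); apply: leq_subr.
- have [b [hb hbz]] := hasIn_yes hiw.
  by rewrite adj_sym; apply: (CaseIII H hz hw hzw (hasIn_no hiz) hb hbz).
- have [b [hb hbz]] := hasIn_yes hiz.
  exact: (CaseIII H hw hz hwz (hasIn_no hiw) hb hbz).
- exact: (Case1 H hw hz hwz (hasIn_no hiw) (hasIn_no hiz)).
Qed.

Unset Implicit Arguments.

Theorem lemma2p13 (T : finType) (e : rel T) (k : nat)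
  (Hirr : irreflexive e)
  (Hodd : odd k) (Hk : 5 <= k)
  (Hstrong : strong e)
  (Hkqt : k_quasi_transitive e k)
  (Hdiam : diam_ge e (k + 2))
  (u v : T) (Huv : dist_is e u v (k + 2))
  (p : seq T) (HP : shortest_path e u v p)
  (Hsc : semicomplete_on e (fun x => x \in u :: p)) :
  semicomplete_on e (fun x => x \notin u :: p).
Proof.
case: HP => /andP[/andP[hpath hu] /eqP hlast] hmin.
case: Huv => [[q0 [hq0 hsq0]] hdmin].
have hsp : size p = k + 2.
  have h1 : size p <= size q0 by apply: hmin.
  have h2 : k + 2 <= size p.
    by apply: hdmin; rewrite /xy_path /dpath hpath hu hlast eqxx.
  lia.
pose n := k + 2.
pose x := fun i => nth u (u :: p) i.
have hPV : PV n x = u :: p.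
  by rewrite /PV /x /n -hsp; have := mkseq_nth u (u :: p); rewrite /mkseq /=.
have hxn : x n = v by rewrite /x /n -hsp -hlast (last_nth u).
have H : setup e n x.
  split.
  - rewrite /n; lia.
  - move=> i j hi hj /eqP; rewrite /x nth_uniq //= ?hsp ?ltnS //.
    by move/eqP.
  - move=> i hi; rewrite /x.
    by apply: (pathP u hpath); rewrite hsp.
  - move=> i j hi hj hij; apply: Hsc.
    + by rewrite /x; apply: mem_nth; rewrite /= hsp ltnS.
    + by rewrite /x; apply: mem_nth; rewrite /= hsp ltnS.
    + rewrite /x nth_uniq //= ?hsp ?ltnS //.
  - move=> a q hd ha hl; apply: hdmin.
    have hau : a = u by rewrite ha.
    subst a; rewrite /xy_path /dpath.
    by move: hd; rewrite /dp => ->; rewrite hl hxn eqxx.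
  - move=> a q hd hs; apply: Hkqt => //.
    by rewrite hs /n; lia.
  - move=> a b; have [q /andP[hd /eqP hl]] := Hstrong a b.
    by exists q; split.
move=> w z hw hz hwz.
by apply: (main_setup H) => //; rewrite hPV.
Qed.
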